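(* Let $X$ be a finite rack. There exists $N_0$ (depending on $X$) such that for every $N\ge N_0$ and every $w\in S_X$, left multiplication by $w$ is an injective map from $S_X^*(N)$ to itself.
   Context: A rack is a set $X$ with an operation $x^y$ such that $x\mapsto x^y$ is bijective for each $y$ and $(z^x)^y=(z^y)^{x^y}$. Its connected components $C_1,\dots,C_k$ are the classes of the smallest equivalence relation with $x\sim x^y$. $B_n$ acts on $X^n$ from the right by $(\dots,x_i,x_{i+1},\dots)^{\sigma_i}=(\dots,x_{i+1},x_i^{x_{i+1}},\dots)$. The structure semigroup is $S_X=\bigsqcup_{n\ge1}X^n/B_n$ with multiplication given by concatenation of representatives. For nonnegative $n_1,\dots,n_k$ with sum $n$, $X^*(n_1,\dots,n_k)$ is the set of $(x_1,\dots,x_n)\in X^n$ having exactly $n_j$ entries in $C_j$ for each $j$ and whose entries generate $X$ (lie in no proper subset closed under $x^y$). $S_X^*(N)=\bigcup_{n_1,\dots,n_k\ge N}X^*(n_1,\dots,n_k)/B_n$, which is an ideal of $S_X$. *)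

(* Defs.v *)
From mathcomp Require Import all_boot.
From Stdlib Require Import Relations.
Set Implicit Arguments. Unset Strict Implicit. Unset Printing Implicit Defensive.

Section Rack.
Variables (X : finType) (op : X -> X -> X).
(* op x y  stands for  x^y. *)

Definition is_rack : Prop :=
  (forall y, bijective (fun x => op x y)) /\
  (forall x y z, op (op z x) y = op (op z y) (op x y)).

Definition rack_step : rel X :=
  fun a b => [exists z, (b == op a z) || (a == op b z)].
Definition same_comp (x y : X) : bool := connect rack_step x y.

(* Right action of the braid generators on tuples:
   (.., x_i, x_{i+1}, ..)^{sigma_i} = (.., x_{i+1}, x_i^{x_{i+1}}, ..). *)
Inductive braid_step : seq X -> seq X -> Prop :=
| bstep_here x y s : braid_step [:: x, y & s] [:: y, op x y & s]
| bstep_cons x s t : braid_step s t -> braid_step (x :: s) (x :: t).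

(* Two tuples lie in the same B_n-orbit: equivalence closure of the
   generator moves (this is the orbit relation of the group B_n). *)
Definition braid_equiv : seq X -> seq X -> Prop :=
  clos_refl_sym_trans (seq X) braid_step.

Definition generates (s : seq X) : Prop :=
  forall A : {set X}, {subset s <= A} ->
    (forall a b, a \in A -> b \in A -> op a b \in A) -> A = [set: X].

(* Tuple s represents an element of S_X^*(N): s has length >= 1, each
   connected component C_j contains n_j >= N of its entries, and the
   entries generate X. (Each component is the class of some x : X.) *)
Definition in_Sstar (N : nat) (s : seq X) : Prop :=
  0 < size s /\
  (forall x : X, N <= count (same_comp x) s) /\
  generates s.

End Rack.

(* Main.v *)
Require Import Defs.
From mathcomp Require Import all_boot.
From Stdlib Require Import Relations ClassicalEpsilon.
From mathcomp Require Import zify.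
Set Implicit Arguments. Unset Strict Implicit. Unset Printing Implicit Defensive.

Definition pb (P : Prop) : bool := if excluded_middle_informative P then true else false.
Lemma pbP (P : Prop) : reflect P (pb P).
Proof. rewrite /pb; case: excluded_middle_informative => h; by constructor. Qed.

Section Braid.
Variables (X : finType) (op : X -> X -> X).
Hypothesis Hbij : forall y, bijective (fun x => op x y).
Hypothesis Hdist : forall x y z, op (op z x) y = op (op z y) (op x y).

Local Notation be := (braid_equiv op).
Local Notation gen := (generates op).

Lemma be_refl s : be s s. Proof. exact: rst_refl. Qed.
Lemma be_sym s t : be s t -> be t s. Proof. exact: rst_sym. Qed.
Lemma be_trans s t u : be s t -> be t u -> be s u. Proof. exact: rst_trans. Qed.
Lemma be_step s t : braid_step op s t -> be s t. Proof. exact: rst_step. Qed.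

Lemma be_cons x s t : be s t -> be (x :: s) (x :: t).
Proof.
elim=> [a b h|a|a b _ IH|a b c _ IH1 _ IH2].
- by apply: be_step; constructor.
- exact: be_refl.
- exact: be_sym.
- exact: be_trans IH2.
Qed.

Lemma be_catl w s t : be s t -> be (w ++ s) (w ++ t).
Proof. by elim: w => //= x w IH h; apply: be_cons; apply: IH. Qed.

Lemma step_catr u s t : braid_step op s t -> braid_step op (s ++ u) (t ++ u).
Proof. by elim=> [x y s'|x s' t' _ IH] /=; constructor. Qed.

Lemma be_catr u s t : be s t -> be (s ++ u) (t ++ u).
Proof.
elim=> [a b h|a|a b _ IH|a b c _ IH1 _ IH2].
- by apply: be_step; apply: step_catr.
- exact: be_refl.
- exact: be_sym.
- exact: be_trans IH2.
Qed.

Lemma be_swap x y s : be [:: x, y & s] [:: y, op x y & s].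
Proof. by apply: be_step; constructor. Qed.

Lemma move_left B y s : be (B ++ y :: s) (y :: map (op^~ y) B ++ s).
Proof.
elim: B => /= [|b B IH]; first exact: be_refl.
apply: be_trans (be_cons b IH) _; exact: be_swap.
Qed.

Lemma move_right e B s : be (e :: B ++ s) (B ++ foldl op e B :: s).
Proof.
elim: B e => /= [|b B IH] e; first exact: be_refl.
apply: be_trans (be_swap _ _ _) _; apply: be_cons; exact: IH.
Qed.

Lemma step_size s t : braid_step op s t -> size s = size t.
Proof. by elim=> //= x s' t' _ ->. Qed.
Lemma be_size s t : be s t -> size s = size t.
Proof. by elim=> [a b /step_size|a|a b _ ->|a b c _ -> _ ->]. Qed.

Lemma sc_sym : ssrbool.symmetric (rack_step op).
Proof. by move=> a b; rewrite /rack_step; apply/existsP/existsP=> [][z]; exists z; rewrite orbC. Qed.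
Lemma sc_csym : @connect_sym X (rack_step op). Proof. apply: sym_connect_sym; exact: sc_sym. Qed.

Lemma sc_refl x : same_comp op x x. Proof. exact: connect0. Qed.
Lemma sc_symm x y : same_comp op x y = same_comp op y x. Proof. exact: sc_csym. Qed.
Lemma sc_trans x y z : same_comp op x y -> same_comp op y z -> same_comp op x z.
Proof. exact: connect_trans. Qed.
Lemma sc_op x z : same_comp op x (op x z).
Proof. apply: connect1; apply/existsP; exists z; by rewrite eqxx. Qed.
Lemma sc_op_r y x z : same_comp op y (op x z) = same_comp op y x.
Proof.
apply/idP/idP=> h; first by apply: sc_trans h _; rewrite sc_symm sc_op.
exact: sc_trans h (sc_op _ _).
Qed.

Lemma step_count y s t : braid_step op s t -> count (same_comp op y) s = count (same_comp op y) t.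
Proof.
elim=> [x z s'|x s' t' _ IH] /=; last by rewrite IH.
by rewrite sc_op_r !addnA [(same_comp op y x) + _]addnC.
Qed.
Lemma be_count y s t : be s t -> count (same_comp op y) s = count (same_comp op y) t.
Proof. by elim=> [a b /step_count|a|a b _ ->|a b c _ -> _ ->]. Qed.


Lemma gen_sup s r : gen s -> {subset s <= r} -> gen r.
Proof. move=> hs sr S rS cl; apply: hs cl => x /sr; exact: rS. Qed.

Lemma gen_map y P : gen P -> gen (map (op^~ y) P).
Proof.
move=> hP S sub cl.
have h: [set a | op a y \in S] = [set: X].
  apply: hP => [a aP|a b]; first by rewrite inE; apply: sub; apply: map_f.
  by rewrite !inE Hdist; apply: cl.
apply/setP=> c; rewrite inE; case: (Hbij y) => g _ Kg.
by rewrite -(Kg c); move/setP: h => /(_ (g c)); rewrite !inE.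
Qed.

Definition Fp t x := exists s, be t (x :: s) /\ gen s.
Definition Fset t : {set X} := [set x | pb (Fp t x)].

Lemma FsetP t x : reflect (Fp t x) (x \in Fset t).
Proof. rewrite inE; exact: pbP. Qed.

Lemma lemS t R A f E z Q : gen R -> be t R -> R = A ++ f :: E ++ z :: Q -> f \in A ->
  op f z \in Fset t.
Proof.
move=> gR tR defR fA.
case: (Hbij z) => g _ Kg.
set Q' := map g Q.
have mQ : map (op^~ z) Q' = Q by rewrite -map_comp map_id_in // => q _ /=; rewrite Kg.
have e1 : be R ((A ++ f :: E) ++ Q' ++ [:: z]).
  have ->: R = (A ++ f :: E) ++ z :: Q by rewrite defR -catA.
  apply: be_catl.
  by move: (move_left Q' z [::]); rewrite cats0 mQ => /be_sym hh; exact: hh.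
case: (Hbij f) => h _ Kh.
set C := E ++ Q'.
set M := map h C.
have mM : map (op^~ f) M = C by rewrite -map_comp map_id_in // => q _ /=; rewrite Kh.
have e2 : be ((A ++ f :: E) ++ Q' ++ [:: z]) ((A ++ M ++ [:: z]) ++ [:: op f z]).
  rewrite -catA /= -catA -/C; apply: be_catl.
  apply: be_trans (_ : be (M ++ [:: f; z]) _).
    by rewrite ?catA -/C; move: (move_left M f [:: z]); rewrite mM => /be_sym hh; exact: hh.
  rewrite -catA; apply: be_catl; exact: be_swap.
have e3 := move_left (A ++ M ++ [:: z]) (op f z) [::].
apply/FsetP; exists (map (op^~ (op f z)) (A ++ M ++ [:: z]) ++ [::]); split.
  apply: be_trans tR _; apply: be_trans e1 _; apply: be_trans e2 _; exact: e3.
rewrite cats0; apply: gen_map => S sub cl.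
have fS : f \in S by apply: sub; rewrite mem_cat fA.
have zS : z \in S by apply: sub; rewrite !mem_cat mem_seq1 eqxx !orbT.
have CS : {subset C <= S}.
  move=> c; rewrite -mM => /mapP [m mM' ->]; apply: cl fS; apply: sub.
  by rewrite !mem_cat mM' orbT.
suff sR : {subset R <= S} by exact: (gR S sR cl).
move=> x; rewrite defR !(mem_cat, inE) => /or4P [xA|/eqP->|xE|/orP [/eqP->|xQ]] //.
- by apply: sub; rewrite mem_cat xA.
- by apply: CS; rewrite mem_cat xE.
- move: xQ; rewrite -mQ => /mapP [q qQ ->]; apply: cl zS; apply: CS.
  by rewrite mem_cat qQ orbT.
Qed.


Lemma Fsub t w s : be t (w ++ s) -> gen s -> Fset s \subset Fset t.
Proof.
move=> tws gs; apply/subsetP=> x /FsetP [s'' [ss gs'']]; apply/FsetP.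
exists (map (op^~ x) w ++ s''); split; last first.
  by apply: (gen_sup gs'') => a ha; rewrite mem_cat ha orbT.
apply: be_trans tws _; apply: be_trans (be_catl w ss) _; exact: move_left.
Qed.

Definition lev K (t : seq X) := forall y, K <= count (same_comp op y) t.

Lemma count_split (v : X) s : 0 < count_mem v s ->
  exists s1 s2, s = s1 ++ v :: s2 /\ count_mem v s2 = (count_mem v s).-1.
Proof.
elim: s => //= x s IH; case: eqP => [->|nx] /= h.
  by exists [::], s; split => //; rewrite add1n.
have [s1 [s2 [-> c]]] := IH h; exists (x :: s1), s2; split => //; by rewrite c.
Qed.

Lemma count_le_mem (s : seq X) (r : seq X) : (forall v, v \in r -> count_mem v s <= 2) ->
  count (mem r) s <= 2 * size r.
Proof.
elim: r => [|v r IH] h /=; first by rewrite count_pred0.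
rewrite mulnS; apply: leq_trans (_ : count (pred1 v) s + count (mem r) s <= _).
  rewrite -count_predUI; apply: leq_trans (leq_addr _ _); apply: eq_leq.
  by apply: eq_count => x; rewrite /= inE.
apply: leq_add; first by apply: h; rewrite inE eqxx.
by apply: IH => u ur; apply: h; rewrite inE ur orbT.
Qed.

Lemma pigeon (P : pred X) s : 2 * #|X| < count P s -> exists v, P v /\ 2 < count_mem v s.
Proof.
move=> h; suff: [exists v, P v && (2 < count_mem v s)].
  by case/existsP => v /andP [pv cv]; exists v.
apply: contraLR h; rewrite negb_exists -leqNgt => /forallP hv.
apply: leq_trans (_ : count (mem [seq v <- enum X | P v]) s <= _).
  by apply: eq_leq; apply: eq_count => x /=; rewrite mem_filter mem_enum andbT.
apply: leq_trans (count_le_mem (r := [seq v <- enum X | P v]) _) _.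
  move=> v; rewrite mem_filter => /andP [pv _]; move: (hv v).
  by rewrite pv /= -leqNgt.
by rewrite leq_mul2l size_filter cardT count_size orbT.
Qed.

Lemma memsplit (y : X) s : y \in s -> exists s1 s2, s = s1 ++ y :: s2.
Proof.
rewrite -has_pred1 has_count => /count_split [s1 [s2 [-> _]]]; by exists s1, s2.
Qed.


Lemma imF (F : {set X}) b : (forall f, f \in F -> op f b \in F) -> (op^~ b) @: F = F.
Proof.
move=> h; apply/eqP; rewrite eqEcard card_imset; last exact: bij_inj (Hbij b).
rewrite leqnn andbT; apply/subsetP=> x /imsetP [c cF ->]; exact: h.
Qed.

Lemma ML t : gen t -> lev (2 * #|X|).+1 t ->
  (forall w, size w <= 3 * #|X| -> {subset w <= Fset t} -> exists s, be t (w ++ s) /\ gen s) ->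
  Fset t = [set: X].
Proof.
move=> gt lt Pref.
set F := Fset t; set e := enum F.
have [s' [ts' gs']] : exists s, be t ((e ++ e ++ e) ++ s) /\ gen s.
  apply: Pref; last by move=> x; rewrite !mem_cat mem_enum => /or3P [] ->.
  by rewrite !size_cat -cardE !mulSn mul0n addn0 !leq_add // max_card.
have gR : gen (e ++ e ++ e ++ s') by apply: (gen_sup gs') => a ha; rewrite !mem_cat ha !orbT.
have Y : forall y, y \in e ++ s' -> forall f, f \in F -> op f y \in F.
  move=> y ys f fF.
  have [s1 [s2 ds]] := memsplit ys.
  have [e1 [e2 de]] : exists e1 e2, e = e1 ++ f :: e2 by apply: memsplit; rewrite mem_enum.
  have ts2 : be t (e ++ e ++ e ++ s') by rewrite -!catA in ts'.
  apply: (@lemS t (e ++ e ++ e ++ s') (e ++ e1) f (e2 ++ s1) y s2 gR ts2).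
  - by rewrite ds -!catA; congr (e ++ _); rewrite {1}de -catA.
  - by rewrite mem_cat mem_enum fF.
set Ys := [set y | [forall f in F, op f y \in F]].
have YT : Ys = setT.
  apply: gR => [y yR|a b].
    rewrite inE; apply/forall_inP => f fF; apply: Y fF.
    by move: yR; rewrite !mem_cat => /or4P [] -> //; rewrite orbT.
  rewrite !inE => /forall_inP ha /forall_inP hb; apply/forall_inP => f fF.
  have : f \in (op^~ b) @: F by rewrite imF.
  case/imsetP => c cF ->.
  by rewrite -Hdist; apply: hb; apply: ha.
have YT' : forall y f, f \in F -> op f y \in F.
  move=> y f fF; have : y \in Ys by rewrite YT inE.
  by rewrite inE => /forall_inP; apply.
have Finv : forall y b, op b y \in F -> b \in F.
  move=> y b h; have : op b y \in (op^~ y) @: F by rewrite (imF (YT' y)).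
  by case/imsetP => c cF /(bij_inj (Hbij y)) ->.
have cl : closed (rack_step op) (mem F).
  apply: (intro_closed sc_csym) => x y /existsP [z /orP [/eqP ->|/eqP ->]]; first exact: YT'.
  exact: Finv.
apply/setP => x; rewrite in_setT.
have [v [sxv cv]] := pigeon (lt x).
have [t1 [t2 [dt c2]]] := count_split (ltnW (ltnW cv)).
have [t3 [t4 [dt2 c4]]] : exists t3 t4, t2 = t3 ++ v :: t4 /\ count_mem v t4 = (count_mem v t2).-1.
  by apply: count_split; rewrite c2; move: cv; case: (count_mem v t) => [|[|[|n]]].
have [t5 [t6 [dt4 _]]] : exists t5 t6, t4 = t5 ++ v :: t6 /\ count_mem v t6 = (count_mem v t4).-1.
  apply: count_split; rewrite c4 c2.
  by move: cv; case: (count_mem v t) => [|[|[|n]]].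
have hv : op v v \in F.
  apply: (@lemS t t (t1 ++ v :: t3) v t5 v t6 gt (be_refl t)).
    by rewrite {1}dt dt2 dt4 -catA.
  by rewrite mem_cat inE eqxx orbT.
have cvx : connect (rack_step op) (op v v) x.
  by rewrite -/(same_comp op _ _) sc_symm; apply: sc_trans sxv _; exact: sc_op.
by move: (closed_connect cl cvx); rewrite hv => <-.
Qed.


Lemma lev_cat K t w s : be t (w ++ s) -> lev K t -> lev (K - size w) s.
Proof.
move=> tws lt y; rewrite leq_subLR; apply: leq_trans (lt y) _.
by rewrite (be_count y tws) count_cat leq_add2r count_size.
Qed.

Lemma lev_mono K K' t : K <= K' -> lev K' t -> lev K t.
Proof. by move=> h l y; apply: leq_trans h (l y). Qed.

Lemma Pj j : j <= #|X| -> forall t, gen t ->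
  lev ((2 * #|X|).+1 + j * (3 * #|X|)) t -> j <= #|Fset t|.
Proof.
elim: j => // j IH hj t gt lt.
case: (leqP j.+1 #|Fset t|) => // small.
have Pref : forall w, size w <= 3 * #|X| -> {subset w <= Fset t} ->
    exists s, be t (w ++ s) /\ gen s.
  elim/last_ind => [|w f IHw] hw sw; first by exists t; split => //; exact: be_refl.
  have [s [tws gs]] : exists s, be t (w ++ s) /\ gen s.
    apply: IHw; first by apply: leq_trans hw; rewrite size_rcons.
    by move=> x xw; apply: sw; rewrite mem_rcons inE xw orbT.
  have ls : lev ((2 * #|X|).+1 + j * (3 * #|X|)) s.
    apply: lev_mono (lev_cat tws lt); rewrite size_rcons in hw; rewrite [j.+1 * _]mulSn.
    set a := j * _; set b := 3 * _ in hw *; clearbody a b.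
    rewrite -addnBA; last by apply: leq_trans (leq_addr _ _); exact: ltnW.
    by rewrite leq_add2l -addnBAC ?leq_addl //; exact: ltnW.
  have hs := IH (ltnW hj) s gs ls.
  have eqF : Fset s = Fset t.
    apply/eqP; rewrite eqEcard (Fsub tws gs) /=; apply: leq_trans hs; exact: small.
  have : f \in Fset s by rewrite eqF; apply: sw; rewrite mem_rcons inE eqxx.
  move/FsetP => [s'' [ss gs'']]; exists s''; split => //.
  rewrite -cats1 -catA /=; apply: be_trans tws _; exact: be_catl.
have := ML gt (lev_mono (leq_addr _ _) lt) Pref.
by move=> eqT; move: small; rewrite eqT cardsT ltnS leqNgt hj.
Qed.

Lemma front t : gen t -> lev ((2 * #|X|).+1 + #|X| * (3 * #|X|)) t -> Fset t = [set: X].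
Proof.
move=> gt lt; apply/eqP; rewrite eqEcard subsetT cardsT; exact: Pj.
Qed.


Definition cvf (s : seq X) : {ffun X -> nat} := [ffun y => count (same_comp op y) s].
Definition Eset l (c : {ffun X -> nat}) : {set l.-tuple X} :=
  [set t : l.-tuple X | pb (gen t) && (cvf t == c)].
Definition crep l (a : l.-tuple X) : l.-tuple X := odflt a [pick b : l.-tuple X | pb (be a b)].
Definition gcount l c := #|[set crep b | b in Eset l c]|.
Definition cpl (c : {ffun X -> nat}) x : {ffun X -> nat} := [ffun y => c y + same_comp op y x].

Lemma crep_R l (a : l.-tuple X) : be a (crep a).
Proof. rewrite /crep; case: pickP => [p /pbP //|_]; exact: be_refl. Qed.

Lemma crep_eq l (a b : l.-tuple X) : be a b -> crep a = crep b.
Proof.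
move=> ab.
have e : (fun z : l.-tuple X => pb (be a z)) =1 (fun z => pb (be b z)).
  move=> z; apply/pbP/pbP => h; first exact: be_trans (be_sym ab) h.
  exact: be_trans ab h.
rewrite /crep (eq_pick e); case: pickP => [p _ //|none].
by move: (none b) => /pbP; case; exact: be_refl.
Qed.

Lemma cvf_cons x s : cvf (x :: s) = cpl (cvf s) x.
Proof. by apply/ffunP => y; rewrite !ffunE /= addnC. Qed.

Definition SH l c x := forall t : l.+1.-tuple X, t \in Eset l.+1 (cpl c x) ->
  exists s, be t (x :: s) /\ gen s.

Definition Fc l x (r : l.-tuple X) : l.+1.-tuple X := crep (cons_tuple x r).

Lemma Fc_crep l x (b : l.-tuple X) : Fc x (crep b) = crep (cons_tuple x b).
Proof. by rewrite /Fc; apply: crep_eq; apply: be_cons; apply: be_sym; exact: crep_R. Qed.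

Lemma gsub l c x : SH l c x ->
  [set crep b | b in Eset l.+1 (cpl c x)] \subset
  [set Fc x r | r in [set crep b | b in Eset l c]].
Proof.
move=> sh; apply/subsetP => _ /imsetP [t tE ->].
have [s [ts gs]] := sh t tE.
have hs : size s == l by move: (be_size ts); rewrite size_tuple /= => -[->].
set st := Tuple hs.
have stE : st \in Eset l c.
  move: tE; rewrite !inE => /andP [_ /eqP ct]; apply/andP; split; first exact/pbP.
  apply/eqP/ffunP => y; move/ffunP: ct => /(_ y); rewrite !ffunE (be_count y ts) /=.
  by rewrite addnC => /addIn.
apply/imsetP; exists (crep st); first by apply/imsetP; exists st.
rewrite Fc_crep; apply: crep_eq; exact: ts.
Qed.

Lemma gmono l c x : SH l c x -> gcount l.+1 (cpl c x) <= gcount l c.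
Proof.
move=> sh; rewrite /gcount; apply: leq_trans (subset_leq_card (gsub sh)) _.
exact: leq_imset_card.
Qed.

Lemma ginj l c x : SH l c x -> gcount l.+1 (cpl c x) = gcount l c ->
  forall u v : l.-tuple X, u \in Eset l c -> v \in Eset l c ->
  be (x :: u) (x :: v) -> be u v.
Proof.
move=> sh eqg u v uE vE xuv.
set A := [set crep b | b in Eset l c].
have sub2 : [set Fc x r | r in A] \subset [set crep b | b in Eset l.+1 (cpl c x)].
  apply/subsetP => _ /imsetP [_ /imsetP [b bE ->] ->]; rewrite Fc_crep.
  apply/imsetP; exists (cons_tuple x b) => //.
  move: bE; rewrite !inE => /andP [/pbP gb /eqP cb]; apply/andP; split.
    by apply/pbP; apply: (gen_sup gb) => z zb; rewrite inE zb orbT.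
  by rewrite /= cvf_cons cb.
have eqI : #|[set Fc x r | r in A]| == #|A|.
  apply/eqP/anti_leq; rewrite leq_imset_card /=.
  rewrite /A -/(gcount l c) -eqg; exact: subset_leq_card (gsub sh).
have /imset_injP inj := eqI.
have : crep u = crep v.
  apply: inj; rewrite ?(imset_f _ uE) ?(imset_f _ vE) //.
  rewrite !Fc_crep; apply: crep_eq; exact: xuv.
move=> e; apply: be_trans (crep_R u) _; rewrite e; apply: be_sym; exact: crep_R.
Qed.


Local Notation rt := (root (rack_step op)).

Lemma size_sum s : size s = \sum_(r | rt r == r) count (same_comp op r) s.
Proof.
elim: s => [|y s IH] /=; first by rewrite big1.
rewrite big_split /= -IH -add1n; congr (_ + _); symmetry.
rewrite (bigD1 (rt y)) /=; last by rewrite (root_root sc_csym).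
rewrite big1 ?addn0.
  by rewrite /same_comp sc_csym connect_root.
move=> r /andP [/eqP rr nr]; apply/eqP; rewrite eqb0; apply/negP => cr.
move: nr; rewrite -rr; move/(rootP sc_csym): cr => ->; by rewrite eqxx.
Qed.

Lemma size_cvf a b : cvf a = cvf b -> size a = size b.
Proof.
move=> e; rewrite !size_sum; apply: eq_bigr => r _.
by move/ffunP: e => /(_ r); rewrite !ffunE.
Qed.

Definition K1 := (2 * #|X|).+1 + #|X| * (3 * #|X|).
Definition GG (u : seq X) := gcount (size u) (cvf u).

Lemma SHlem x u : lev K1 u -> SH (size u) (cvf u) x.
Proof.
move=> lu t.
rewrite inE => /andP [/pbP gt /eqP ct].
have lt : lev K1 t.
  move=> y; apply: leq_trans (lu y) _; move/ffunP: ct => /(_ y); rewrite !ffunE => ->.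
  exact: leq_addr.
have : x \in Fset t by rewrite front // inE.
by move/FsetP.
Qed.

Lemma GGx x u : lev K1 u -> GG (x :: u) <= GG u.
Proof. by move=> lu; rewrite /GG cvf_cons /=; apply: gmono; apply: SHlem. Qed.

Definition cnt y (s : seq X) := count (same_comp op y) s.

Lemma cnt_eq y z s : same_comp op z y -> cnt z s = cnt y s.
Proof.
move=> zy; apply: eq_count => w; apply/idP/idP => h.
  by apply: sc_trans h; rewrite sc_symm.
exact: sc_trans zy h.
Qed.

Lemma chain d : forall a b, gen a -> lev K1 a -> (forall y, cnt y a <= cnt y b) ->
  \sum_y (cnt y b - cnt y a) <= d -> GG b <= GG a.
Proof.
elim: d => [|d IH] a b ga la ab sd.
  have e : cvf a = cvf b.
    apply/ffunP => y; rewrite !ffunE; apply/eqP; rewrite eqn_leq ab /=.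
    rewrite -subn_eq0 -leqn0; apply: leq_trans sd; rewrite (bigD1 y) //=; exact: leq_addr.
  by rewrite /GG (size_cvf e) e.
case: (boolP [exists y, cnt y a < cnt y b]) => [/existsP [y lt]|].
  set a' := y :: a.
  apply: leq_trans (GGx y la).
  have cnt' : forall z, cnt z a' = same_comp op z y + cnt z a by [].
  apply: IH.
  - by apply: (gen_sup ga) => w wa; rewrite inE wa orbT.
  - by move=> z; apply: leq_trans (la z) _; rewrite -/(cnt z a) -/(cnt z a') cnt' leq_addl.
  - move=> z; rewrite cnt'; case: (boolP (same_comp op z y)) => [zy|_]; last exact: ab.
    by rewrite !(cnt_eq _ zy) add1n.
  - rewrite -ltnS; apply: leq_trans sd.
    rewrite (bigD1 y) //= [X in _ <= X](bigD1 y) //= -addSn leq_add //.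
      by rewrite sc_refl add1n subnS ltn_predL subn_gt0.
    by apply: leq_sum => z _; rewrite leq_sub2l // leq_addl.
rewrite negb_exists => /forallP h.
have e : cvf a = cvf b.
  apply/ffunP => y; rewrite !ffunE; apply/eqP; rewrite eqn_leq ab /=.
  by move: (h y); rewrite -leqNgt.
by rewrite /GG (size_cvf e) e.
Qed.


Lemma iter_count y k : k <= count (same_comp op y) (iter k (cat (enum X)) [::]).
Proof.
elim: k => //= k IH; rewrite count_cat -add1n leq_add //.
by rewrite -has_count; apply/hasP; exists y; rewrite ?mem_enum ?sc_refl.
Qed.

Lemma main_sec : exists N0 : nat, forall N : nat, N0 <= N ->
    forall w : seq X, 0 < size w ->
    (forall u : seq X, in_Sstar op N u -> in_Sstar op N (w ++ u)) /\
    (forall u v : seq X, in_Sstar op N u -> in_Sstar op N v ->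
       braid_equiv op (w ++ u) (w ++ v) -> braid_equiv op u v).
Proof.
set u1 := enum X ++ iter K1 (cat (enum X)) [::].
have g1 : gen u1 by move=> S sub _; apply/setP => x; rewrite in_setT; apply: sub; rewrite mem_cat mem_enum.
have l1 : lev K1 u1 by move=> y; rewrite count_cat; apply: leq_trans (iter_count y K1) (leq_addl _ _).
have exP : exists n, pb (exists u, gen u /\ lev K1 u /\ GG u = n).
  by exists (GG u1); apply/pbP; exists u1.
case: (ex_minnP exP) => m /pbP [u0 [g0 [l0 e0]]] hmin.
exists (K1 + size u0) => N hN w _.
have scat : forall w u, in_Sstar op N u -> in_Sstar op N (w ++ u).
  move=> w' u [su [cu gu]]; split; first by rewrite size_cat addn_gt0 su orbT.
  split; first by move=> y; rewrite count_cat; apply: leq_trans (cu y) (leq_addl _ _).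
  by apply: (gen_sup gu) => z zu; rewrite mem_cat zu orbT.
have injx : forall x u v, in_Sstar op N u -> in_Sstar op N v -> be (x :: u) (x :: v) -> be u v.
  move=> x u v [su [cu gu]] [sv [cv gv]] xuv.
  have lu : lev K1 u by move=> y; apply: leq_trans (cu y); apply: leq_trans hN; exact: leq_addr.
  have hu : GG u <= GG u0.
    apply: (@chain (\sum_y (cnt y u - cnt y u0))) => // y.
    apply: leq_trans (count_size _ _) _; apply: leq_trans (cu y).
    by apply: leq_trans hN; exact: leq_addl.
  have lxu : lev K1 (x :: u) by move=> y; apply: leq_trans (lu y) _; rewrite /= leq_addl.
  have m2 : m <= GG (x :: u).
    apply: hmin; apply/pbP; exists (x :: u); split; last by [].
    by apply: (gen_sup gu) => z zu; rewrite inE zu orbT.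
  have hx := GGx x lu.
  have eqg : gcount (size u).+1 (cpl (cvf u) x) = gcount (size u) (cvf u).
    have : GG (x :: u) = GG u by apply/anti_leq; rewrite hx /=; apply: leq_trans m2; rewrite -e0.
    by rewrite /GG cvf_cons.
  have hv : size v == size u by move: (be_size xuv) => /= [->].
  have cvu : cvf v = cvf u.
    apply/ffunP => y; rewrite !ffunE; move: (be_count y xuv) => /= /addnI ->; done.
  have := @ginj (size u) (cvf u) x (@SHlem x u lu) eqg (in_tuple u) (Tuple hv).
  apply.
  - by rewrite inE; apply/andP; split; [apply/pbP|].
  - by rewrite inE /= cvu eqxx andbT; apply/pbP.
  - exact: xuv.
split; first by move=> u; apply: scat.
move=> u v iu iv; elim: w => // x w IH h; apply: IH.
by apply: injx (scat _ _ iu) (scat _ _ iv) h.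
Qed.

End Braid.

Theorem corollary4p23 (X : finType) (op : X -> X -> X)
  (Hrack : is_rack op) :
  exists N0 : nat, forall N : nat, N0 <= N ->
    forall w : seq X, 0 < size w ->
    (forall u : seq X, in_Sstar op N u -> in_Sstar op N (w ++ u)) /\
    (forall u v : seq X, in_Sstar op N u -> in_Sstar op N v ->
       braid_equiv op (w ++ u) (w ++ v) -> braid_equiv op u v).
Proof. by case: Hrack => H1 H2; apply: main_sec. Qed.
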